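(* Let $\mathcal P$ be the set of real polynomials $P\in\mathbb R[X]$ with $\int_0^\infty P(t)e^{-2t}\,dt=1$, and let $\mathcal P_+=\{P\in\mathcal P: P(t)\ge0\ \forall t\ge0\}$. Then for $P\in\mathcal P_+$ the following are equivalent: (i) $P$ is an extreme point of the convex set $\mathcal P_+$; (ii) $P(t)=c\,t^k\prod_{i=1}^{\ell}(t-\lambda_i)^2$ for some $k,\ell\in\mathbb N$, $\lambda_i>0$ for all $i$, and a normalization constant $c>0$.
   Context: An extreme point of a convex set $\mathcal C$ is a point $a\in\mathcal C$ such that $a=\frac12(x+y)$ with $x,y\in\mathcal C$ implies $x=y=a$. *)

(* Defs.v *)
From HB Require Import structures.
From mathcomp Require Import all_boot all_order all_algebra.
From mathcomp Require Import all_classical all_reals all_analysis.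
Unset Strict Implicit. Unset Printing Implicit Defensive.
Import Order.TTheory GRing.Theory Num.Theory.
Local Open Scope classical_set_scope.
Local Open Scope ring_scope.

Definition laplace2 {R : realType} (P : {poly R}) : \bar R :=
  (\int[@lebesgue_measure R]_(t in `[0%R, +oo[) (P.[t] * expR (- (2 * t)))%:E)%E.

Arguments laplace2 {R} P.
Definition Pset (R : realType) : set {poly R} :=
  [set P | laplace2 P = 1%:E].

Definition Pplus (R : realType) : set {poly R} :=
  [set P | Pset R P /\ forall t : R, 0 <= t -> 0 <= P.[t]].

Definition extreme_point {R : realType} (C : set {poly R}) (a : {poly R}) : Prop :=
  C a /\ forall x y : {poly R}, C x -> C y -> a = 2^-1 *: (x + y) -> x = a /\ y = a.

(* Main.v *)
Require Import Defs.
From HB Require Import structures.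
From mathcomp Require Import all_boot all_order all_algebra.
From mathcomp Require Import all_classical all_reals all_analysis.
From mathcomp Require Import measurable_realfun.
From mathcomp Require Import polyrcf.
From mathcomp Require Import ring lra zify.
Import Order.TTheory GRing.Theory Num.Theory.
Local Open Scope classical_set_scope.
Local Open Scope ring_scope.
Import numFieldNormedType.Exports.

Lemma pos_near {R : realType} {p : {poly R}} {a : R} : 0 < p.[a] ->
  exists2 e : R, 0 < e & forall t, `|t - a| < e -> 0 < p.[t].
Proof.
move=> pa.
have := cvgr_gt _ (@continuous_horner R p a) _ pa.
move=> [e /= e0 He]; exists e => // t ht; apply: He.
by rewrite /ball /= distrC.
Qed.

Lemma neg_near {R : realType} {p : {poly R}} {a : R} : p.[a] < 0 ->
  exists2 e : R, 0 < e & forall t, `|t - a| < e -> p.[t] < 0.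
Proof.
move=> pa; have [e e0 He] := @pos_near _ (- p) a (ltac:(by rewrite hornerN oppr_gt0)).
by exists e => // t /He; rewrite hornerN oppr_gt0.
Qed.

Lemma near_right {R : realType} (l e : R) : 0 < e -> `|(l + e / 2) - l| < e.
Proof.
move=> e0; have -> : l + e / 2 - l = e / 2 by ring.
rewrite ger0_norm; lra.
Qed.

Lemma near_left {R : realType} (l m e : R) : 0 < m -> m <= e -> `|(l - m / 2) - l| < e.
Proof.
move=> m0 me; have -> : l - m / 2 - l = - (m / 2) by ring.
rewrite normrN ger0_norm; lra.
Qed.

Definition nn {R : realType} (p : {poly R}) := forall t : R, 0 <= t -> 0 <= p.[t].


Lemma fill_point {R : realType} {h : {poly R}} {l : R} : 0 <= l ->
  (forall t, 0 <= t -> t != l -> 0 <= h.[t]) -> 0 <= h.[l].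
Proof.
move=> l0 H; rewrite leNgt; apply/negP => /neg_near [e e0 He].
have t0 : 0 <= l + e / 2 by lra.
have tl : l + e / 2 != l by apply/eqP; lra.
have := H _ t0 tl; have := He _ (near_right l e e0).
move=> h1 h2; lra.
Qed.

Lemma nn_div {R : realType} {g q : {poly R}} {l : R} : 0 <= l ->
  (forall t, 0 <= t -> t != l -> 0 < q.[t]) -> nn (g * q) -> nn g.
Proof.
move=> l0 Hq H.
have H' : forall s, 0 <= s -> s != l -> 0 <= g.[s].
  move=> s s0 sl; have := H s s0; rewrite hornerM pmulr_lge0 //; exact: Hq.
move=> t t0; case: (eqVneq t l) => [->|tl]; [exact: fill_point l0 H' | exact: H'].
Qed.

Lemma simple_root {R : realType} {f : {poly R}} {l : R} : 0 < l -> nn f -> f.[l] = 0 ->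
  exists g, f = g * ('X - l%:P).
Proof.
move=> l0 nf fl.
have /factor_theorem [g1 Hg1] : root f l by apply/eqP.
exists g1; exact Hg1.
Qed.

Lemma double_root {R : realType} {f : {poly R}} {l : R} : 0 < l -> nn f -> f.[l] = 0 ->
  exists g, f = g * ('X - l%:P) ^+ 2.
Proof.
move=> l0 nf fl.
have /factor_theorem [g1 Hg1] : root f l by apply/eqP.
suff : root g1 l.
  by move=> /factor_theorem [g Hg]; exists g; rewrite Hg1 Hg -mulrA expr2.
apply/eqP; case: (ltrgtP g1.[l] 0) => // gl.
- have [e e0 He] := neg_near gl.
  have t0 : 0 <= l + e / 2 by lra.
  have := nf _ t0; rewrite Hg1 hornerM !hornerE.
  have := He _ (near_right l e e0) => h1 h2.
  have h3 : 0 < l + e / 2 - l by lra.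
  have := pmulr_lge0 (g1.[l + e / 2]) h3; rewrite h2 => /esym; rewrite leNgt h1 //.
- have [e e0 He] := pos_near gl.
  pose m := Num.min e l.
  have m0 : 0 < m by rewrite lt_min e0.
  have me : m <= e by rewrite ge_min lexx.
  have ml : m <= l by rewrite ge_min lexx orbT.
  have t0 : 0 <= l - m / 2 by lra.
  have := nf _ t0; rewrite Hg1 hornerM !hornerE.
  have := He _ (near_left l m e m0 me) => h1 h2.
  have h3 : l - m / 2 - l < 0 by lra.
  have : g1.[l - m / 2] * (l - m / 2 - l) < 0 by rewrite pmulr_rlt0.
  lra.
Qed.

Lemma root0 {R : realType} {f : {poly R}} : f.[0] = 0 -> exists g, f = g * 'X.
Proof.
move=> f0; have /factor_theorem [g Hg] : root f 0 by apply/eqP.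
by exists g; rewrite Hg subr0.
Qed.

Lemma peelX {R : realType} (k : nat) : forall (Q x : {poly R}), nn x -> nn ('X^k * Q - x) ->
  exists x1, x = 'X^k * x1 /\ nn x1 /\ nn (Q - x1).
Proof.
elim: k => [|k IH] Q x nx nb.
  by exists x; rewrite expr0 mul1r; split; rewrite ?expr0 ?mul1r in nb.
have x0 : x.[0] = 0.
  apply/le_anti; rewrite nx ?lexx // andbT.
  have := nb 0 (lexx 0); rewrite hornerD hornerN hornerM hornerXn expr0n /= mul0r add0r.
  by rewrite oppr_ge0.
have [g Hg] := root0 x0.
have qX : forall t : R, 0 <= t -> t != 0 -> 0 < 'X.[t].
  by move=> t t0 tn; rewrite hornerX lt_neqAle eq_sym tn.
have ng : nn g by apply: (nn_div (lexx 0) qX); rewrite -Hg.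
have nb' : nn ('X^k * Q - g).
  apply: (nn_div (lexx 0) qX).
  have -> : ('X^k * Q - g) * 'X = 'X^(k.+1) * Q - x by rewrite Hg exprSr; ring.
  exact: nb.
have [x1 [Hx1 [n1 n2]]] := IH Q g ng nb'.
by exists x1; split => //; rewrite Hg Hx1 exprSr; ring.
Qed.

Lemma peelL {R : realType} (s : seq R) : (forall l, l \in s -> 0 < l) ->
  forall (Q x : {poly R}), nn x -> nn (Q * \prod_(l <- s) ('X - l%:P) ^+ 2 - x) ->
  exists x1, x = x1 * \prod_(l <- s) ('X - l%:P) ^+ 2 /\ nn x1 /\ nn (Q - x1).
Proof.
elim: s => [|a s IH] spos Q x nx nb.
  by exists x; rewrite big_nil mulr1; split; rewrite ?big_nil ?mulr1 in nb.
have a0 : 0 < a by apply: spos; rewrite mem_head.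
have spos' : forall l, l \in s -> 0 < l by move=> l ls; apply: spos; rewrite in_cons ls orbT.
rewrite big_cons in nb *.
have xa : x.[a] = 0.
  apply/le_anti/andP; split; last exact: nx _ (ltW a0).
  have := nb a (ltW a0).
  have hz : (('X - a%:P) ^+ 2).[a] = 0 by rewrite horner_exp hornerXsubC subrr expr0n.
  rewrite hornerD hornerN hornerM hornerM hz mul0r mulr0 add0r.
  by rewrite oppr_ge0.
have [g Hg] := double_root a0 nx xa.
have qX : forall t : R, 0 <= t -> t != a -> 0 < ('X - a%:P).[t] ^+ 2.
  by move=> t t0 tn; rewrite hornerXsubC exprn_even_gt0 //= subr_eq0.
have qX' : forall t : R, 0 <= t -> t != a -> 0 < (('X - a%:P) ^+ 2).[t].
  by move=> t t0 tn; rewrite horner_exp; exact: qX.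
have ng : nn g by apply: (nn_div (ltW a0) qX'); rewrite -Hg.
have nb' : nn (Q * \prod_(l <- s) ('X - l%:P) ^+ 2 - g).
  apply: (nn_div (ltW a0) qX').
  set PP := \prod_(l <- s) _.
  have -> : (Q * PP - g) * ('X - a%:P) ^+ 2 = Q * (('X - a%:P) ^+ 2 * PP) - x by rewrite Hg; ring.
  exact: nb.
have [x1 [Hx1 [n1 n2]]] := IH spos' Q g ng nb'.
by exists x1; split => //; rewrite Hg Hx1; ring.
Qed.

Lemma lead_pos {R : realType} {p : {poly R}} : nn p -> p != 0 -> 0 < lead_coef p.
Proof.
move=> np pn0; case: (ltrgtP (lead_coef p) 0) => // [lt|]; last first.
  by move/eqP; rewrite lead_coef_eq0 (negPf pn0).
have : 0 < lead_coef (- p) by rewrite lead_coefN oppr_gt0.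
move=> /poly_pinfty_gt_lc [n Hn].
have := Hn (Num.max n 0) (ltac:(by rewrite le_max lexx)).
have := np (Num.max n 0) (ltac:(by rewrite le_max lexx orbT)).
rewrite lead_coefN hornerN => h1 h2; lra.
Qed.

Lemma bounded_const {R : realType} {x0 : {poly R}} {K : R} : nn x0 -> nn (K%:P - x0) ->
  (size x0 <= 1)%N.
Proof.
move=> n1 n2; rewrite leqNgt; apply/negP => sz.
have x00 : x0 != 0 by rewrite -size_poly_gt0 (ltn_trans _ sz).
have l1 := lead_pos n1 x00.
have e : lead_coef (K%:P - x0) = - lead_coef x0.
  rewrite addrC lead_coefDl ?lead_coefN // size_polyN (leq_ltn_trans (size_polyC_leq1 K)) //.
have q0 : K%:P - x0 != 0.
  apply/eqP => h; have := e; rewrite h lead_coef0 => /esym/eqP; rewrite oppr_eq0 lead_coef_eq0.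
  by rewrite (negPf x00).
have := lead_pos n2 q0; rewrite e oppr_gt0 => h; lra.
Qed.

Lemma lower_bound {R : realType} {P : {poly R}} : (forall t, 0 <= t -> 0 < P.[t]) ->
  (1 < size P)%N -> exists2 m, 0 < m & forall t, 0 <= t -> m <= P.[t].
Proof.
move=> Pp sz.
have P0 : P != 0 by rewrite -size_poly_gt0 (ltn_trans _ sz).
have nP : nn P by move=> t t0; exact/ltW/Pp.
have lp := lead_pos nP P0.
have [n Hn] := poly_pinfty_gt_lc lp.
pose b := Num.max n 0.
have b0 : 0 <= b by rewrite le_max lexx orbT.
have [c cin Hc] := @EVT_min R (horner P) 0 b b0 (continuous_subspaceT (@continuous_horner R P)).
have c0 : 0 <= c by move: cin; rewrite in_itv /= => /andP[].
exists (Num.min P.[c] (lead_coef P)); first by rewrite lt_min lp Pp.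
move=> t t0; case: (lerP t b) => tb.
  rewrite ge_min; apply/orP; left; apply: Hc; rewrite in_itv /= t0 tb //.
rewrite ge_min; apply/orP; right; apply: Hn.
by apply: le_trans (ltW tb); rewrite le_max lexx.
Qed.

Lemma cont_f {R : realType} (p : {poly R}) : continuous (fun t : R => p.[t] * expR (- (2 * t))).
Proof.
move=> x; apply: continuousM; first exact: continuous_horner.
apply: continuous_comp; last exact: continuous_expR.
apply: continuousN; apply: continuousM; [exact: cvg_cst | exact: cvg_id].
Qed.

Lemma meas_f {R : realType} (p : {poly R}) :
  measurable_fun (`[0%R, +oo[%classic : set R) (fun t : R => (p.[t] * expR (- (2 * t)))%:E).
Proof.
apply/measurable_EFinP; apply: measurable_funTS.
exact: continuous_measurable_fun (cont_f p).
Qed.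

Lemma dom0 {R : realType} (t : R) : (`[0%R, +oo[%classic : set R) t -> 0 <= t.
Proof. by rewrite /= in_itv /= andbT. Qed.

Lemma f_ge0 {R : realType} (p : {poly R}) : nn p ->
  forall t, (`[0%R, +oo[%classic : set R) t -> (0 <= (p.[t] * expR (- (2 * t)))%:E)%E.
Proof. by move=> np t /dom0 t0; rewrite lee_fin mulr_ge0 // ?expR_ge0 // np. Qed.

Lemma laplace2_add {R : realType} (p q : {poly R}) : nn p -> nn q ->
  laplace2 (p + q) = (laplace2 p + laplace2 q)%E.
Proof.
move=> np nq; rewrite /laplace2.
under eq_integral => t _ do rewrite hornerD mulrDl EFinD.
apply: ge0_integralD => //; [exact: f_ge0 | exact: meas_f | exact: f_ge0 | exact: meas_f].
Qed.

Lemma laplace2_scale {R : realType} (a : R) (p : {poly R}) : 0 <= a -> nn p ->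
  laplace2 (a *: p) = (a%:E * laplace2 p)%E.
Proof.
move=> a0 np; rewrite /laplace2.
under eq_integral => t _ do rewrite hornerZ -mulrA EFinM.
apply: ge0_integralZl_EFin => //; [exact: f_ge0 | exact: meas_f].
Qed.

Lemma laplace2_le {R : realType} (p q : {poly R}) : nn p ->
  (forall t, 0 <= t -> p.[t] <= q.[t]) -> (laplace2 p <= laplace2 q)%E.
Proof.
move=> np pq; rewrite /laplace2.
apply: ge0_le_integral => //; [exact: f_ge0 | exact: meas_f | exact: meas_f |].
by move=> t /dom0 t0; rewrite lee_fin ler_wpM2r ?expR_ge0 ?pq.
Qed.

Lemma laplace2_0 {R : realType} : laplace2 (0 : {poly R}) = 0%E.
Proof.
rewrite /laplace2; under eq_integral => t _ do rewrite horner0 mul0r.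
exact: integral0.
Qed.

Lemma nnZ {R : realType} (a : R) (p : {poly R}) : 0 <= a -> nn p -> nn (a *: p).
Proof. by move=> a0 np t t0; rewrite hornerZ mulr_ge0 // np. Qed.

Lemma nnD {R : realType} (p q : {poly R}) : nn p -> nn q -> nn (p + q).
Proof. by move=> np nq t t0; rewrite hornerD addr_ge0 // ?np ?nq. Qed.

Lemma Pplus_comb {R : realType} (x y : {poly R}) (p q : R) :
  Pplus R x -> Pplus R y -> 0 <= p -> 0 <= q -> p + q = 1 -> Pplus R (p *: x + q *: y).
Proof.
move=> [Lx nx] [Ly ny] p0 q0 pq; split; last by apply: nnD; apply: nnZ.
rewrite /Pset /= laplace2_add; try by apply: nnZ.
rewrite !laplace2_scale // Lx Ly !mule1 -EFinD pq //.
Qed.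

Lemma rigid {R : realType} (P D : {poly R}) : extreme_point (Pplus R) P ->
  nn (P + D) -> nn (P - D) -> exists c, D = c *: P.
Proof.
move=> [[LP nP] ext] nPD nMD.
pose x := P + 2^-1 *: D; pose y := P - 2^-1 *: D.
have hx : forall t, 0 <= t -> (2^-1 *: P).[t] <= x.[t].
  move=> t t0; have := nPD t t0; rewrite /x !(hornerD, hornerZ) => h; lra.
have hy : forall t, 0 <= t -> (2^-1 *: P).[t] <= y.[t].
  move=> t t0; have := nMD t t0; rewrite /y !(hornerD, hornerN, hornerZ) => h; lra.
have nP2 : nn (2^-1 *: P) by apply: nnZ => //; lra.
have nx : nn x by move=> t t0; apply: le_trans (hx t t0); exact: nP2.
have ny : nn y by move=> t t0; apply: le_trans (hy t t0); exact: nP2.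
have lx := laplace2_le _ _ nP2 hx; have ly := laplace2_le _ _ nP2 hy.
have h2 : (0:R) <= 2^-1 by rewrite invr_ge0 ler0n.
rewrite (laplace2_scale _ _ h2 nP) LP mule1 in lx ly.
have xy : x + y = 2 *: P.
  by rewrite /x /y addrACA subrr addr0 scaler_nat mulr2n.
have sxy := laplace2_add _ _ nx ny; rewrite xy (laplace2_scale _ _ (ler0n _ 2) nP) LP mule1 in sxy.
have [a Ha] : exists a, laplace2 x = a%:E.
  move: lx ly sxy; case: (laplace2 x) => [a| |]; first by exists a.
    by case: (laplace2 y).
  by [].
have [b Hb] : exists b, laplace2 y = b%:E.
  move: lx ly sxy; rewrite Ha; case: (laplace2 y) => [b| |]; first by exists b.
    by [].
  by [].
rewrite Ha in lx sxy; rewrite Hb in ly sxy.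
rewrite !lee_fin in lx ly.
have sab : a + b = 2 by apply: EFin_inj; rewrite EFinD.
have a0 : a != 0 by apply/eqP => h; lra.
have b0 : b != 0 by apply/eqP => h; lra.
pose x' := a^-1 *: x; pose y' := b^-1 *: y.
have Px' : Pplus R x'.
  have ai : 0 <= a^-1 by rewrite invr_ge0; lra.
  split; last by apply: nnZ.
  by rewrite /Pset /= (laplace2_scale _ _ ai nx) Ha -EFinM mulVf.
have Py' : Pplus R y'.
  have bi : 0 <= b^-1 by rewrite invr_ge0; lra.
  split; last by apply: nnZ.
  by rewrite /Pset /= (laplace2_scale _ _ bi ny) Hb -EFinM mulVf.
pose u := (a / 2 + 1 / 4) *: x' + (3 / 4 - a / 2) *: y'.
pose v := (a / 2 - 1 / 4) *: x' + (5 / 4 - a / 2) *: y'.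
have Pu : Pplus R u by apply: Pplus_comb => //; lra.
have Pv : Pplus R v by apply: Pplus_comb => //; lra.
have bE : b = 2 - a by lra.
have Puv : P = 2^-1 *: (u + v).
  apply/polyP => i; rewrite /u /v /x' /y' /x /y !(coefD, coefN, coefZ) bE.
  field; apply/andP; split; apply/eqP; lra.
have [uP _] := ext u v Pu Pv Puv.
exists (a - b); apply/polyP => i.
have := congr1 (fun p : {poly R} => p`_i) uP.
rewrite /u /x' /y' /x /y !(coefD, coefN, coefZ) bE => h.
have key : D`_i - (a - (2 - a)) * P`_i =
   4 * a * (2 - a) * ((a / 2 + 1 / 4) * (a^-1 * (P`_i + 2^-1 * D`_i)) +
     (3 / 4 - a / 2) * ((2 - a)^-1 * (P`_i - 2^-1 * D`_i)) - P`_i).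
  field; apply/andP; split; apply/eqP; lra.
move: key; rewrite h subrr mulr0 => /eqP; rewrite subr_eq0 => /eqP.
by [].
Qed.

Definition rigidp {R : realType} (P : {poly R}) :=
  forall D, nn (P + D) -> nn (P - D) -> exists c, D = c *: P.

Lemma rigid_div {R : realType} (g q : {poly R}) : q != 0 -> nn q -> rigidp (g * q) -> rigidp g.
Proof.
move=> q0 nq rP D n1 n2.
have h1 : nn (g * q + D * q) by move=> t t0; rewrite -mulrDl hornerM mulr_ge0 ?n1 ?nq.
have h2 : nn (g * q - D * q) by move=> t t0; rewrite -mulrBl hornerM mulr_ge0 ?n2 ?nq.
have [c Hc] := rP _ h1 h2; exists c; apply: (mulIf q0); rewrite Hc -!mul_polyC; ring.
Qed.

Lemma structure {R : realType} (n : nat) : forall (P : {poly R}), (size P < n)%N -> P != 0 ->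
  nn P -> rigidp P ->
  exists k (s : seq R) c, 0 < c /\ (forall l, l \in s -> 0 < l) /\
    P = c *: ('X^k * \prod_(l <- s) ('X - l%:P) ^+ 2).
Proof.
elim: n => [|n IH] P sz P0 nP rP; first by [].
have [P00|P00] := eqVneq P.[0] 0.
  have [g Hg] := root0 P00.
  have g0 : g != 0 by apply: contra_neq P0 => g0; rewrite Hg g0 mul0r.
  have qX : forall t : R, 0 <= t -> t != 0 -> 0 < 'X.[t].
    by move=> t t0 tn; rewrite hornerX lt_neqAle eq_sym tn.
  have ng : nn g by apply: (nn_div (lexx 0) qX); rewrite -Hg.
  have rg : rigidp g.
    apply: (@rigid_div _ _ 'X); first by rewrite polyX_eq0.
      by move=> t t0; rewrite hornerX.
    by rewrite -Hg.
  have szg : (size g < n)%N by move: sz; rewrite Hg size_mulX //.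
  have [k [s [c [c0 [spos Hc]]]]] := IH g szg g0 ng rg.
  exists k.+1, s, c; split => //; split => //.
  by rewrite Hg Hc exprSr -!mul_polyC; ring.
have [[l [l0 Pl]]|noroot] := pselect (exists l : R, 0 < l /\ P.[l] = 0).
  have [g Hg] := double_root l0 nP Pl.
  have q0 : ('X - l%:P) ^+ 2 != 0 by rewrite expf_neq0 // polyXsubC_eq0.
  have g0 : g != 0 by apply: contra_neq P0 => g0; rewrite Hg g0 mul0r.
  have qX : forall t : R, 0 <= t -> t != l -> 0 < (('X - l%:P) ^+ 2).[t].
    by move=> t t0 tn; rewrite horner_exp hornerXsubC exprn_even_gt0 //= subr_eq0.
  have ng : nn g by apply: (nn_div (ltW l0) qX); rewrite -Hg.
  have rg : rigidp g.
    apply: (@rigid_div _ _ (('X - l%:P) ^+ 2)) => //; last by rewrite -Hg.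
    by move=> t t0; rewrite horner_exp hornerXsubC sqr_ge0.
  have szg : (size g < n)%N.
    by move: sz; rewrite Hg size_mul // size_exp_XsubC addnS /= addn2 ltnS => /ltnW.
  have [k [s [c [c0 [spos Hc]]]]] := IH g szg g0 ng rg.
  exists k, (l :: s), c; split => //; split.
    by move=> l'; rewrite in_cons => /orP[/eqP ->|]; [exact: l0 | exact: spos].
  by rewrite Hg Hc big_cons -!mul_polyC; ring.
have Ppos : forall t, 0 <= t -> 0 < P.[t].
  move=> t t0; rewrite lt_neqAle nP // andbT; apply/eqP => h.
  case: (eqVneq t 0) => [t00|tn0]; first by move: P00; rewrite t00 in h; rewrite -h eqxx.
  apply: noroot; exists t; split => //; rewrite lt_neqAle eq_sym tn0 t0 //.
case: (leqP (size P) 1) => sz1.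
  exists 0%N, [::], P`_0; split; last split => //.
    by have := Ppos 0 (lexx 0); rewrite horner_coef0.
  by rewrite big_nil expr0 mulr1 alg_polyC; exact: size1_polyC.
have [m m0 Hm] := lower_bound Ppos sz1.
have h1 : nn (P + m%:P) by move=> t t0; rewrite hornerD hornerC addr_ge0 // ?nP // ltW.
have h2 : nn (P - m%:P) by move=> t t0; rewrite hornerD hornerN hornerC subr_ge0 Hm.
have [c Hc] := rP _ h1 h2.
have := congr1 (fun p : {poly R} => size p) Hc; rewrite size_polyC gt_eqF //=.
have [->|c0] := eqVneq c 0; first by rewrite scale0r size_poly0.
rewrite size_scale // => h; move: sz1; rewrite -h.
by [].
Qed.

Local Close Scope classical_set_scope.

Theorem lemma9 (R : realType) (P : {poly R}) :
  Pplus R P ->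
  (extreme_point (Pplus R) P <->
   exists (k l : nat) (lam : 'I_l -> R) (c : R),
     0 < c /\ (forall i, 0 < lam i) /\
     P = c *: ('X^k * \prod_(i < l) ('X - (lam i)%:P) ^+ 2)).
Proof.
move=> HP; split.
  move=> ext; have [LP nP] := HP.
  have P0 : P != 0.
    apply/eqP => P0; move: LP; rewrite /Pset /= P0 laplace2_0 => h.
    by have := congr1 fine h => /= /eqP; rewrite eq_sym oner_eq0.
  have rP : rigidp P by move=> D n1 n2; exact: rigid ext n1 n2.
  have [k [s [c [c0 [spos Hc]]]]] := structure _ P (ltnSn (size P)) P0 nP rP.
  exists k, (size s), (fun i => nth 0 s i), c; split => //; split.
    by move=> i; apply: spos; exact: mem_nth.
  by rewrite Hc (big_nth 0) big_mkord.
move=> [k [l [lam [c [c0 [lpos HPe]]]]]].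
split => // x y Px Py Hxy.
have [Lx nx] := Px; have [Ly ny] := Py; have [LP nP] := HP.
have yE : y = 2 *: P - x.
  rewrite Hxy scalerA mulfV ?scale1r; first by rewrite addrC addKr.
  by rewrite pnatr_eq0.
pose s := [seq lam i | i <- index_enum 'I_l].
have spos : forall t, t \in s -> 0 < t by move=> t /mapP [i _ ->].
have PiE : \prod_(i < l) ('X - (lam i)%:P) ^+ 2 = \prod_(t <- s) ('X - t%:P) ^+ 2.
  by rewrite big_map.
rewrite PiE in HPe.
set Pi := \prod_(t <- s) ('X - t%:P) ^+ 2 in HPe.
have P2 : 2 *: P = 'X^k * ((2 * c)%:P * Pi).
  by rewrite HPe scalerA -mul_polyC mulrCA.
have nb : nn ('X^k * ((2 * c)%:P * Pi) - x) by rewrite -P2 -yE.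
have [x1 [Hx1 [n1 n2]]] := peelX k ((2 * c)%:P * Pi) x nx nb.
have [x0 [Hx0 [n3 n4]]] := peelL s spos ((2 * c)%:P) x1 n1 n2.
have sz := bounded_const n3 n4.
set d := x0`_0.
have d0 : 0 <= d by have := n3 0 (lexx 0); rewrite horner_coef0.
have xE : x = (d / c) *: P.
  rewrite HPe scalerA mulfVK ?gt_eqF // Hx1 Hx0 (size1_polyC sz) -/d -!mul_polyC.
  by rewrite /Pi mulrCA.
have dc : d / c = 1.
  have dc0 : 0 <= d / c by rewrite divr_ge0 // ltW.
  have := Lx; rewrite /Pset /= xE (laplace2_scale _ _ dc0 nP) LP mule1 => h.
  exact: EFin_inj h.
rewrite dc scale1r in xE.
split => //; rewrite yE xE scaler_nat mulr2n addrK //.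
Qed.
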